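(* Let $\sigma$ be a nonnegative finite measure on $\mathbb{R}^2$ which is upper $\alpha$-Ahlfors regular for some $\alpha>1$ and constants $M,r_*>0$, with $0<\sigma(\mathbb{R}^2)=\Phi\le Mr_*^\alpha$. Let $X=\frac1\Phi\int_{\mathbb{R}^2}x\,d\sigma(x)$ and $r=\frac1\Phi\int_{\mathbb{R}^2}|x-X|\,d\sigma(x)$. Then $$M^{1/\alpha}r\gtrsim_\alpha\Phi^{1/\alpha}.$$
   Context: For $\alpha\in[0,2]$, a nonnegative finite measure $\sigma$ on $\mathbb{R}^2$ is upper $\alpha$-Ahlfors regular with constants $M,r_*>0$ if $\sigma(B(x,r))\le Mr^\alpha$ for all $x\in\operatorname{supp}\sigma$ and all $r\in(0,r_*]$. $A\gtrsim_\alpha B$ means $A\ge cB$ with $c>0$ depending only on $\alpha$. *)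

(* Defs.v *)
(* The plane R^2 is modelled as R * R with the
   product (Borel x Borel) sigma-algebra and the Euclidean distance. *)
From HB Require Import structures.
From mathcomp Require Import all_boot all_order all_algebra.
From mathcomp Require Import all_classical all_reals all_analysis.
Set Implicit Arguments. Unset Strict Implicit. Unset Printing Implicit Defensive.
Import Order.TTheory GRing.Theory Num.Theory.
Local Open Scope classical_set_scope.
Local Open Scope ring_scope.

Definition dist2 {R : realType} (x y : R * R) : R :=
  Num.sqrt ((x.1 - y.1) ^+ 2 + (x.2 - y.2) ^+ 2).

Definition norm2 {R : realType} (x : R * R) : R :=
  Num.sqrt (x.1 ^+ 2 + x.2 ^+ 2).

Definition ball2 {R : realType} (x : R * R) (r : R) : set (R * R) :=
  [set y | dist2 x y < r].

Definition msupp {R : realType} (mu : set (R * R) -> \bar R) : set (R * R) :=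
  [set x | forall e : R, 0 < e -> (0 < mu (ball2 x e))%E].

Definition upper_ahlfors {R : realType} (mu : set (R * R) -> \bar R)
  (alpha M rs : R) : Prop :=
  forall x, msupp mu x -> forall r : R, 0 < r -> r <= rs ->
    (mu (ball2 x r) <= (M * r `^ alpha)%:E)%E.

(* Main.v *)
Require Import Defs.
From HB Require Import structures.
From mathcomp Require Import all_boot all_order all_algebra.
From mathcomp Require Import all_classical all_reals all_analysis.
From mathcomp Require Import ring lra.
From mathcomp Require Import measurable_realfun.
Import Order.TTheory GRing.Theory Num.Theory.
Local Open Scope classical_set_scope.
Local Open Scope ring_scope.

Section Geo.
Context {R : realType}.

Lemma mink (a b c d : R) :
  Num.sqrt ((a + c) ^+ 2 + (b + d) ^+ 2) <=
  Num.sqrt (a ^+ 2 + b ^+ 2) + Num.sqrt (c ^+ 2 + d ^+ 2).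
Proof.
set p := Num.sqrt (a ^+ 2 + b ^+ 2); set q := Num.sqrt (c ^+ 2 + d ^+ 2).
have p0 : 0 <= p by apply: sqrtr_ge0.
have q0 : 0 <= q by apply: sqrtr_ge0.
have hp : p ^+ 2 = a ^+ 2 + b ^+ 2 by rewrite sqr_sqrtr // addr_ge0 // sqr_ge0.
have hq : q ^+ 2 = c ^+ 2 + d ^+ 2 by rewrite sqr_sqrtr // addr_ge0 // sqr_ge0.
have pq : a * c + b * d <= p * q.
  have h : (a * c + b * d) ^+ 2 <= (p * q) ^+ 2.
    rewrite exprMn hp hq.
    have : 0 <= (a * d - b * c) ^+ 2 by apply: sqr_ge0.
    by move=> H; rewrite -subr_ge0; apply: le_trans H _; rewrite le_eqVlt; apply/orP; left; apply/eqP; ring.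
  have pq0 : 0 <= p * q by apply: mulr_ge0.
  apply: le_trans (ler_norm _) _.
  by rewrite -sqrtr_sqr -(ger0_norm pq0) -sqrtr_sqr ler_wsqrtr.
rewrite -(ger0_norm (addr_ge0 p0 q0)) -sqrtr_sqr ler_wsqrtr //.
have -> : (a + c) ^+ 2 + (b + d) ^+ 2 = (a ^+ 2 + b ^+ 2) + (c ^+ 2 + d ^+ 2) + (a * c + b * d) *+ 2 by ring.
rewrite sqrrD hp hq; lra.
Qed.

Lemma dist2_ge0 (x y : R * R) : 0 <= dist2 x y.
Proof. exact: sqrtr_ge0. Qed.

Lemma dist2C (x y : R * R) : dist2 x y = dist2 y x.
Proof. by rewrite /dist2; congr Num.sqrt; ring. Qed.

Lemma dist2_tri (x y z : R * R) : dist2 x z <= dist2 x y + dist2 y z.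
Proof.
have -> : dist2 x z = Num.sqrt (((x.1 - y.1) + (y.1 - z.1)) ^+ 2 + ((x.2 - y.2) + (y.2 - z.2)) ^+ 2).
  by rewrite /dist2; congr Num.sqrt; ring.
exact: mink.
Qed.

Lemma sqrt_le_abs (u v : R) : Num.sqrt (u ^+ 2 + v ^+ 2) <= `|u| + `|v|.
Proof.
rewrite -(ger0_norm (addr_ge0 (normr_ge0 u) (normr_ge0 v))) -sqrtr_sqr ler_wsqrtr //.
rewrite sqrrD (real_normK (num_real u)) (real_normK (num_real v)).
have := mulr_ge0 (normr_ge0 u) (normr_ge0 v); lra.
Qed.

Lemma abs_le_sqrt (u v : R) : `|u| <= Num.sqrt (u ^+ 2 + v ^+ 2).
Proof.
rewrite -sqrtr_sqr ler_wsqrtr //; have := sqr_ge0 v; lra.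
Qed.

End Geo.

Lemma dist2_0r {R : realType} (x : R * R) : dist2 x (0, 0) = norm2 x.
Proof. by rewrite /dist2 /norm2 /= !subr0. Qed.

Lemma dist2_0l {R : realType} (x : R * R) : dist2 (0, 0) x = norm2 x.
Proof. by rewrite dist2C dist2_0r. Qed.


Section Meas.
Context {R : realType}.
Variable sigma : {finite_measure set (R * R)%type -> \bar R}.

Lemma measurable_dist2 (x : R * R) : measurable_fun setT (fun y : R * R => dist2 x y).
Proof.
rewrite /dist2.
apply: (measurableT_comp (continuous_measurable_fun (@sqrt_continuous R))).
apply: measurable_funD; apply: measurable_funX; apply: measurable_funB.
- exact: measurable_cst.
- exact: measurable_fst.
- exact: measurable_cst.
- exact: measurable_snd.
Qed.

Lemma measurable_ball2 (x : R * R) e : measurable (ball2 x e).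
Proof.
have := measurable_dist2 x measurableT _ (measurable_itv `]-oo, e[).
rewrite setTI; congr measurable; apply/seteqP; split=> y /=;
  by rewrite /ball2 /= in_itv.
Qed.

End Meas.

Lemma measurable_dist2r {R : realType} (X : R * R) :
  measurable_fun setT (fun y : R * R => dist2 y X).
Proof.
have -> : (fun y : R * R => dist2 y X) = (fun y => dist2 X y).
  by apply: funext => y; rewrite dist2C.
exact: measurable_dist2.
Qed.


Section Supp.
Context {R : realType}.
Variable sigma : {finite_measure set (R * R)%type -> \bar R}.

Definition cen (k : int * int * nat) : R * R :=
  ((k.1.1)%:~R / (k.2.+1)%:R, (k.1.2)%:~R / (k.2.+1)%:R).
Definition rad (k : int * int * nat) : R := 2 / (k.2.+1)%:R.

Definition Fcov (n : nat) : set (R * R) :=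
  match (unpickle n : option (int * int * nat)) with
  | Some k => if sigma (ball2 (cen k) (rad k)) == 0%E then ball2 (cen k) (rad k) else set0
  | None => set0
  end.

Lemma Fcov_meas n : measurable (Fcov n).
Proof.
rewrite /Fcov; case: (unpickle n) => [k|] //.
by case: ifP => _ //; apply: measurable_ball2.
Qed.

Lemma Fcov0 n : sigma (Fcov n) = 0%E.
Proof.
rewrite /Fcov; case: (unpickle n) => [k|]; last exact: measure0.
by case: ifP => [/eqP //|_]; exact: measure0.
Qed.

Lemma grid_approx (y : R) (N : R) : 0 < N ->
  0 <= y - (Num.floor (y * N))%:~R / N < N^-1.
Proof.
move=> N0; have /andP[h1 h2] := floor_itv (y * N).
set k := Num.floor (y * N) in h1 h2 *.
rewrite intrD in h2.
apply/andP; split.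
  by rewrite subr_ge0 ler_pdivrMr.
rewrite ltrBlDl.
have -> : (k%:~R / N + N^-1) = (k%:~R + 1) / N by rewrite mulrDl mul1r.
by rewrite ltr_pdivlMr.
Qed.

Lemma not_supp_cover (y : R * R) : ~ msupp sigma y -> (\bigcup_n Fcov n) y.
Proof.
move=> ns.
have [e e0 he] : exists2 e : R, 0 < e & sigma (ball2 y e) = 0%E.
  apply: contra_notP ns => H e e0.
  rewrite lt0e measure_ge0 andbT; apply/negP => /eqP E; apply: H; by exists e.
set m := Num.truncn (4 / e).
set N : R := (m.+1)%:R.
have N0 : 0 < N by rewrite ltr0n.
have hm : 4 / N < e.
  have := truncnS_gt (4 / e); rewrite -/m -/N => h.
  rewrite ltr_pdivrMr // mulrC -ltr_pdivrMr //.
set k : int * int * nat := (Num.floor (y.1 * N), Num.floor (y.2 * N), m).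
have ck : cen k = ((Num.floor (y.1 * N))%:~R / N, (Num.floor (y.2 * N))%:~R / N) by [].
have rk : rad k = 2 / N by [].
have yin : dist2 (cen k) y < rad k.
  rewrite dist2C rk /dist2; apply: le_lt_trans (sqrt_le_abs _ _) _.
  rewrite ck /=.
  have /andP[a1 a2] := grid_approx y.1 N N0.
  have /andP[b1 b2] := grid_approx y.2 N N0.
  rewrite (ger0_norm a1) (ger0_norm b1).
  have -> : 2 / N = N^-1 + N^-1 by rewrite mulr_natl mulr2n.
  exact: ltrD.
have sub : ball2 (cen k) (rad k) `<=` ball2 y e.
  move=> z; rewrite /ball2 /= => hz.
  apply: le_lt_trans (dist2_tri y (cen k) z) _.
  rewrite dist2C.
  apply: (@lt_trans _ _ (4 / N)) => //.
  have -> : 4 / N = rad k + rad k by rewrite rk -mulrDl; congr (_ / _); ring.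
  by apply: ltrD.
have s0 : sigma (ball2 (cen k) (rad k)) = 0%E.
  apply/eqP; rewrite eq_le measure_ge0 andbT -he.
  by apply: le_measure => //; rewrite inE; apply: measurable_ball2.
exists (pickle k); first exact: I.
rewrite /Fcov pickleK s0 eqxx; exact: yin.
Qed.

Lemma supp_exists (X : R * R) t :
  (0 < sigma (ball2 X t))%E -> exists y, msupp sigma y /\ dist2 X y < t.
Proof.
move=> pos; apply: contrapT => H.
have sub : ball2 X t `<=` \bigcup_n Fcov n.
  move=> y hy; apply: not_supp_cover => sy; apply: H; exists y; split => //.
have := measure_sigma_subadditive sigma Fcov_meas (measurable_ball2 X t) sub.
rewrite eseries0; last by move=> i _ _; apply: Fcov0.
by rewrite leNgt pos.
Qed.

End Supp.


Lemma final_alg {R : realType} (alpha M Phi r : R) : 1 < alpha -> 0 < M -> 0 < Phi -> 0 <= r ->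
  (forall t, 2 * r < t -> Phi <= 2 * M * (2 * t) `^ alpha) ->
  8^-1 * Phi `^ alpha^-1 <= M `^ alpha^-1 * r.
Proof.
move=> ha hM hP hr H.
have a0 : 0 < alpha by apply: lt_trans ha.
have ai0 : 0 <= alpha^-1 by rewrite invr_ge0 ltW.
have ai1 : alpha^-1 <= 1 by rewrite invf_le1 // ltW.
have M20 : 0 < 2 * M by rewrite mulr_gt0.
set K := (Phi / (2 * M)) `^ alpha^-1.
have HK : forall t, 2 * r < t -> K <= 2 * t.
  move=> t ht.
  have t0 : 0 <= 2 * t by apply: mulr_ge0 => //; apply: ltW; apply: le_lt_trans ht; apply: mulr_ge0.
  have h1 : Phi / (2 * M) <= (2 * t) `^ alpha.
    by rewrite ler_pdivrMr // mulrC; apply: H.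
  have := ge0_ler_powR ai0 _ _ h1.
  rewrite -powRrM mulfV ?gt_eqF // powRr1 //.
  apply; rewrite nnegrE ?powR_ge0 //.
  by apply: divr_ge0; apply: ltW.
have K4 : K <= 4 * r.
  rewrite leNgt; apply/negP => hlt.
  have := HK ((K / 2 + 2 * r) / 2) ltac:(lra).
  lra.

have eP : Phi `^ alpha^-1 = 2 `^ alpha^-1 * M `^ alpha^-1 * K.
  rewrite -(powRM _ (ler0n _ 2) (ltW hM)) -(powRM _ (ltW M20) (divr_ge0 (ltW hP) (ltW M20))).
  by congr (_ `^ _); rewrite mulrCA mulfV ?gt_eqF // mulr1.
have h2 : 2 `^ alpha^-1 <= (2 : R) by apply: ler1_powR => //; rewrite ler1n.
have P0 : 0 <= M `^ alpha^-1 by apply: powR_ge0.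
have K0 : 0 <= K by apply: powR_ge0.
have h3 : M `^ alpha^-1 * K <= M `^ alpha^-1 * (4 * r) by apply: ler_wpM2l.
have h4 : 2 `^ alpha^-1 * (M `^ alpha^-1 * K) <= 2 * (M `^ alpha^-1 * K).
  by apply: ler_wpM2r => //; apply: mulr_ge0.
rewrite eP -mulrA.
lra.
Qed.


Section Main.
Context {R : realType}.
Variable sigma : {finite_measure set (R * R)%type -> \bar R}.
Variables (alpha M rs : R) (X : R * R).
Hypotheses (ha : 0 < alpha) (hM : 0 < M) (hrs : 0 < rs)
  (hup : upper_ahlfors sigma alpha M rs) (hpos : (0 < sigma setT)%E)
  (hle : (sigma setT <= (M * rs `^ alpha)%:E)%E)
  (hint : sigma.-integrable setT (fun x : R * R => (norm2 x)%:E)).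

Lemma finE {A : set (R * R)} : measurable A -> sigma A = (fine (sigma A))%:E.
Proof. by move=> mA; rewrite fineK // fin_num_measure. Qed.

Lemma fine_ge0' A : 0 <= fine (sigma A).
Proof. by apply: fine_ge0; apply: measure_ge0. Qed.

Lemma Phi_gt0 : 0 < fine (sigma setT).
Proof. by move: hpos; rewrite (finE measurableT) lte_fin. Qed.

Lemma dist_int : sigma.-integrable setT (fun x => (dist2 x X)%:E).
Proof.
apply: (le_integrable measurableT _ _
  (integrableD measurableT hint (finite_measure_integrable_cst sigma (norm2 X) measurableT))).
  by apply/measurable_EFinP; apply: measurable_dist2r.
move=> x _ /=.
rewrite lee_fin (ger0_norm (dist2_ge0 _ _)) ger0_norm; last first.
  by rewrite addr_ge0 // /norm2 sqrtr_ge0.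
have := dist2_tri x (0, 0) X.
by rewrite dist2_0r dist2_0l.
Qed.

Definition Iv := Rintegral sigma setT (fun x => dist2 x X).

Lemma IvE : (\int[sigma]_(x in setT) (dist2 x X)%:E)%E = Iv%:E.
Proof. by rewrite /Iv /Rintegral fineK // (integrable_fin_num measurableT dist_int). Qed.

Lemma Iv_ge0 : 0 <= Iv.
Proof.
rewrite /Iv /Rintegral; apply: fine_ge0; apply: integral_ge0 => x _.
by rewrite lee_fin dist2_ge0.
Qed.

Definition At (t : R) := [set x : R * R | t <= dist2 x X].

Lemma At_meas t : measurable (At t).
Proof.
have := measurable_dist2r X measurableT _ (measurable_itv `[t, +oo[).
rewrite setTI; congr measurable; apply/seteqP; split=> y /=;
  by rewrite /At /= in_itv /= andbT.
Qed.

Lemma markov_At t : 0 < t -> t * fine (sigma (At t)) <= Iv.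
Proof.
move=> t0.
have mg : measurable_fun setT (fun x : R * R => (dist2 x X)%:E).
  by apply/measurable_EFinP; apply: measurable_dist2r.
have := @le_integral_comp_abse _ _ _ sigma setT measurableT
  (fun x => (dist2 x X)%:E) t id (@measurable_id _ _ setT) (fun r h => h)
  (fun x y _ _ h => h) mg t0.
have -> : setT `&` [set x | (t%:E <= `|(dist2 x X)%:E|)%E] = At t.
  apply/seteqP; split => x /=.
    by case=> _; rewrite lee_fin ger0_norm ?dist2_ge0.
  by move=> h; split => //; rewrite lee_fin ger0_norm ?dist2_ge0.
have -> : (\int[sigma]_(x in setT) id `|(dist2 x X)%:E|)%E = (\int[sigma]_(x in setT) (dist2 x X)%:E)%E.
  by apply: eq_integral => x _ /=; rewrite ger0_norm ?dist2_ge0.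
rewrite IvE => h; rewrite -lee_fin EFinM -(finE (At_meas t)) //.
Qed.

Lemma cover t : fine (sigma setT) <= fine (sigma (ball2 X t)) + fine (sigma (At t)).
Proof.
have h : (sigma setT <= sigma (ball2 X t `|` At t))%E.
  apply: le_measure; rewrite ?inE //; first exact: measurableU (measurable_ball2 X t) (At_meas t).
  move=> x _ /=; rewrite /ball2 /At /=.
  case: (ltP (dist2 X x) t) => h; [by left | right].
  by rewrite dist2C.
rewrite -lee_fin EFinD -(finE measurableT) -(finE (measurable_ball2 X t)) -(finE (At_meas t)).
exact: le_trans h (measureU2 sigma (measurable_ball2 X t) (At_meas t)).
Qed.

Lemma key t : 2 * (fine (sigma setT))^-1 * Iv < t ->
  fine (sigma setT) <= 2 * M * (2 * t) `^ alpha.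
Proof.
set Phi := fine (sigma setT) => ht.
have P0 : 0 < Phi := Phi_gt0.
have r0 : 0 <= Phi^-1 * Iv by apply: mulr_ge0; [rewrite invr_ge0 ltW | exact: Iv_ge0].
have t0 : 0 < t by apply: le_lt_trans ht; rewrite -mulrA mulr_ge0.
set a := fine (sigma (At t)).
set b := fine (sigma (ball2 X t)).
have ha1 : t * a <= Iv := markov_At t t0.
have hcov : Phi <= b + a := cover t.
have a2 : 2 * a <= Phi.
  have e1 : Iv = Phi * (Phi^-1 * Iv) by rewrite mulrA mulfV ?gt_eqF // mul1r.
  have e2 : Phi * (2 * (Phi^-1 * Iv)) <= Phi * t.
    by apply: ler_wpM2l; [exact: ltW | apply: ltW; rewrite mulrA].
  have : t * (2 * a) <= t * Phi.
    rewrite mulrCA [t * Phi]mulrC; apply: le_trans (_ : 2 * Iv <= _).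
      by rewrite ler_pM2l.
    by rewrite e1; move: e2; rewrite mulrCA.
  by rewrite ler_pM2l.
have b2 : Phi <= 2 * b by lra.
have tt0 : 0 <= 2 * t by rewrite mulr_ge0 // ltW.
have powle : forall u, 0 <= u -> u <= 2 * t -> u `^ alpha <= (2 * t) `^ alpha.
  move=> u u0 ut; apply: ge0_ler_powR => //; rewrite ?nnegrE //; exact: ltW.
have Mp0 : 0 <= M * (2 * t) `^ alpha by rewrite mulr_ge0 ?powR_ge0 // ltW.
case: (leP (2 * t) rs) => hrt; last first.
  have : Phi <= M * rs `^ alpha by rewrite -lee_fin /Phi -(finE measurableT).
  have : M * rs `^ alpha <= M * (2 * t) `^ alpha.
    by apply: ler_wpM2l; [exact: ltW | apply: powle; [exact: ltW | exact: ltW]].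
  lra.
have bpos : (0 < sigma (ball2 X t))%E.
  rewrite (finE (measurable_ball2 X t)) lte_fin -/b; lra.
have [y [sy dy]] := supp_exists sigma X t bpos.
have sub : ball2 X t `<=` ball2 y (2 * t).
  move=> z; rewrite /ball2 /= => hz.
  apply: le_lt_trans (dist2_tri y X z) _.
  rewrite dist2C; lra.
have hb : (sigma (ball2 X t) <= sigma (ball2 y (2 * t)))%E.
  by apply: le_measure; rewrite ?inE //; apply: measurable_ball2.
have := le_trans hb (hup y sy (2 * t) (mulr_gt0 (ltr0Sn R 1) t0) hrt).
rewrite (finE (measurable_ball2 X t)) lee_fin -/b => hb2.
lra.
Qed.

End Main.

Theorem corollary4p8 (R : realType) (alpha : R) (halpha : 1 < alpha) :
  exists2 c : R, 0 < c &
  forall (sigma : {finite_measure set (R * R)%type -> \bar R}) (M rs : R),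
    0 < M -> 0 < rs ->
    upper_ahlfors sigma alpha M rs ->
    (0 < sigma setT)%E ->
    (sigma setT <= (M * rs `^ alpha)%:E)%E ->
    sigma.-integrable setT (fun x : R * R => (norm2 x)%:E) ->
    let Phi := fine (sigma setT) in
    let X : R * R := (Phi^-1 * Rintegral sigma setT (fun x => x.1),
                      Phi^-1 * Rintegral sigma setT (fun x => x.2)) in
    let r := Phi^-1 * Rintegral sigma setT (fun x : R * R => dist2 x X) in
    M `^ alpha^-1 * r >= c * Phi `^ alpha^-1.
Proof.
exists (8^-1); first by rewrite invr_gt0.
move=> sigma M rs hM hrs hup hpos hle hint; cbv zeta.
have ha : 0 < alpha by apply: lt_trans halpha.
have P0 := Phi_gt0 sigma hpos.
apply: final_alg => //.
  by apply: mulr_ge0; [rewrite invr_ge0 ltW | exact: (Iv_ge0 sigma _)].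
move=> t ht.
rewrite mulrA in ht.
exact: (key _ _ _ _ _ ha hM hrs hup hpos hle hint t ht).
Qed.
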